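(* Let $f$ and $g$ be the functions of $(\xi,\eta)$ defined in the context, with $\mu=\frac{59729}{19885499729}$ and $c=\frac{149896229}{10}\sqrt{\frac{1495978707}{3317816087784734}}$. Let $$x_1=\tfrac{312498189077}{625000000000},\quad x_2=\tfrac{312498095327}{625000000000},\quad y_1=\tfrac{4330127145451}{5000000000000},\quad y_3=\tfrac{43301267124383}{50000000000000},$$ so that $x_2<x_1$, $y_3<y_1$, and let $R=[x_2,x_1]\times[y_3,y_1]$. Then (i) $g>0$ on the top edge $\{(x,y_1):x\in[x_2,x_1]\}$ and $g<0$ on the bottom edge $\{(x,y_3):x\in[x_2,x_1]\}$; (ii) $f>0$ on the right edge $\{(x_1,y):y\in[y_3,y_1]\}$ and $f<0$ on the left edge $\{(x_2,y):y\in[y_3,y_1]\}$; (iii) consequently there exists a point $P_0=(\xi_0,\eta_0)\in R$ with $f(\xi_0,\eta_0)=g(\xi_0,\eta_0)=0$, i.e. $(\xi_0,\eta_0)$ is an equilibrium point of the relativistic circular restricted three-body system described in the context.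
   Context: Relativistic circular restricted three-body problem in rotating coordinates $(\xi,\eta)$ with mass parameter $\mu\in(0,1/2]$ and (normalized) speed of light $c>0$. Set $\rho=\sqrt{\xi^2+\eta^2}$, $\rho_1=\sqrt{(\xi+\mu)^2+\eta^2}$, $\rho_2=\sqrt{(\xi+\mu-1)^2+\eta^2}$, and $V=\dot\xi^2+\dot\eta^2+2(\xi\dot\eta-\dot\xi\eta)+\rho^2$. Define $$w_0=\tfrac12(\xi^2+\eta^2)+\frac{1-\mu}{\rho_1}+\frac{\mu}{\rho_2},$$ $$w_1=-\tfrac32\Big(1-\tfrac13\mu(1-\mu)\Big)\rho^2+\tfrac18V^2+\tfrac32\Big(\frac{1-\mu}{\rho_1}+\frac{\mu}{\rho_2}\Big)V-\tfrac12\Big(\frac{(1-\mu)^2}{\rho_1^2}+\frac{\mu^2}{\rho_2^2}\Big)$$ $$\qquad+\mu(1-\mu)\Big[\Big(4\dot\eta+\tfrac{7\xi}{2}\Big)\Big(\frac1{\rho_1}-\frac1{\rho_2}\Big)-\tfrac12\eta^2\Big(\frac{\mu}{\rho_1^3}+\frac{1-\mu}{\rho_2^3}\Big)+\frac{3\mu-2}{2\rho_1}-\frac{1}{\rho_1\rho_2}+\frac{1-3\mu}{2\rho_2}\Big],$$ $w=w_0+\frac1{c^2}w_1$ (a function of $\xi,\dot\xi,\eta,\dot\eta$), and $n=1-\frac{3}{2c^2}\big(1-\frac13\mu(1-\mu)\big)$. The equations of motion are $$\ddot\xi-2n\dot\eta=\frac{\partial w}{\partial\xi}-\frac{d}{dt}\Big(\frac{\partial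 w}{\partial\dot\xi}\Big),\qquad \ddot\eta+2n\dot\xi=\frac{\partial w}{\partial\eta}-\frac{d}{dt}\Big(\frac{\partial w}{\partial\dot\eta}\Big).$$ Define $f(\xi,\eta)=\frac{\partial w}{\partial\xi}$ and $g(\xi,\eta)=\frac{\partial w}{\partial\eta}$, both evaluated at $\dot\xi=\dot\eta=0$; the equilibrium points (constant solutions) of the system are exactly the common zeros of $f$ and $g$. *)

(* Defs.v *)
From Stdlib Require Import Reals.
Open Scope R_scope.

Definition rho (xi eta : R) : R := sqrt (xi^2 + eta^2).
Definition rho1 (mu xi eta : R) : R := sqrt ((xi + mu)^2 + eta^2).
Definition rho2 (mu xi eta : R) : R := sqrt ((xi + mu - 1)^2 + eta^2).

Definition Vfun (xi xid eta etad : R) : R :=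
  xid^2 + etad^2 + 2 * (xi * etad - xid * eta) + (rho xi eta)^2.

Definition w0 (mu xi eta : R) : R :=
  / 2 * (xi^2 + eta^2) + (1 - mu) / rho1 mu xi eta + mu / rho2 mu xi eta.

Definition w1 (mu xi xid eta etad : R) : R :=
  let r := rho xi eta in
  let r1 := rho1 mu xi eta in
  let r2 := rho2 mu xi eta in
  let V := Vfun xi xid eta etad in
  - (3/2) * (1 - /3 * mu * (1 - mu)) * r^2 + /8 * V^2
  + (3/2) * ((1 - mu) / r1 + mu / r2) * V
  - /2 * ((1 - mu)^2 / r1^2 + mu^2 / r2^2)
  + mu * (1 - mu) *
    ( (4 * etad + 7 * xi / 2) * (/ r1 - / r2)
      - /2 * eta^2 * (mu / r1^3 + (1 - mu) / r2^3)
      + (3 * mu - 2) / (2 * r1) - / (r1 * r2) + (1 - 3 * mu) / (2 * r2)).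

Definition w (mu c xi xid eta etad : R) : R :=
  w0 mu xi eta + / c^2 * w1 mu xi xid eta etad.

(* "f(xi,eta) = d" : d is the partial derivative dw/dxi at (xi,0,eta,0). *)
Definition is_f (mu c xi eta d : R) : Prop :=
  derivable_pt_lim (fun s => w mu c s 0 eta 0) xi d.
(* "g(xi,eta) = d" : d is the partial derivative dw/deta at (xi,0,eta,0). *)
Definition is_g (mu c xi eta d : R) : Prop :=
  derivable_pt_lim (fun t => w mu c xi 0 t 0) eta d.

Definition mu0 : R := 59729 / 19885499729.
Definition c0 : R := 149896229 / 10 * sqrt (1495978707 / 3317816087784734).

Definition x1 : R := 312498189077 / 625000000000.
Definition x2 : R := 312498095327 / 625000000000.
Definition y1 : R := 4330127145451 / 5000000000000.
Definition y3 : R := 43301267124383 / 50000000000000.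

(* Main.v *)
Require Import Defs.
From Stdlib Require Import Reals QArith ZArith Qreals Qround Lra Psatz Lia List Ranalysis5.
From Coquelicot Require Import Coquelicot.
Import ListNotations.
Open Scope R_scope.

Inductive T := Kq (q:Q) | Vr (n:nat) | Ad (a b:T) | Mu (a b:T) | Op (a:T).

Fixpoint ev (e : nat -> R) (t : T) : R :=
  match t with
  | Kq q => Q2R q
  | Vr n => e n
  | Ad a b => ev e a + ev e b
  | Mu a b => ev e a * ev e b
  | Op a => - ev e a
  end.

Definition PREC : positive := Eval compute in (2^100)%positive.
Definition rdn (q:Q) : Q := (inject_Z (Qfloor (q * inject_Z (Zpos PREC))) * (1 # PREC))%Q.
Definition rup (q:Q) : Q := (inject_Z (Qceiling (q * inject_Z (Zpos PREC))) * (1 # PREC))%Q.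

Lemma Q2R_PREC : Q2R (inject_Z (Zpos PREC)) * Q2R (1 # PREC) = 1.
Proof. unfold Q2R; simpl. field. apply not_0_IZR. discriminate. Qed.

Lemma Q2R_PREC_pos : 0 < Q2R (1 # PREC).
Proof. unfold Q2R; simpl. rewrite Rmult_1_l. apply Rinv_0_lt_compat. apply IZR_lt. reflexivity. Qed.

Lemma rdn_le q : Q2R (rdn q) <= Q2R q.
Proof.
  unfold rdn. rewrite Q2R_mult.
  pose proof (Qle_Rle _ _ (Qfloor_le (q * inject_Z (Zpos PREC)))) as H.
  rewrite Q2R_mult in H. pose proof Q2R_PREC. pose proof Q2R_PREC_pos.
  apply Rmult_le_compat_r with (r := Q2R (1#PREC)) in H; [|lra].
  rewrite Rmult_assoc, H0, Rmult_1_r in H. exact H.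
Qed.

Lemma rup_le q : Q2R q <= Q2R (rup q).
Proof.
  unfold rup. rewrite Q2R_mult.
  pose proof (Qle_Rle _ _ (Qle_ceiling (q * inject_Z (Zpos PREC)))) as H.
  rewrite Q2R_mult in H. pose proof Q2R_PREC. pose proof Q2R_PREC_pos.
  apply Rmult_le_compat_r with (r := Q2R (1#PREC)) in H; [|lra].
  rewrite Rmult_assoc, H0, Rmult_1_r in H. exact H.
Qed.

Definition qmin (a b : Q) : Q := if Qle_bool a b then a else b.
Definition qmax (a b : Q) : Q := if Qle_bool a b then b else a.

Lemma qmin_le1 a b : Q2R (qmin a b) <= Q2R a.
Proof. unfold qmin. destruct (Qle_bool a b) eqn:E; [lra|].
  apply Rlt_le, Qlt_Rlt. apply Qnot_le_lt. intro H. apply Qle_bool_iff in H. congruence. Qed.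
Lemma qmin_le2 a b : Q2R (qmin a b) <= Q2R b.
Proof. unfold qmin. destruct (Qle_bool a b) eqn:E; [|lra].
  apply Qle_Rle. apply Qle_bool_iff. exact E. Qed.
Lemma qmax_ge1 a b : Q2R a <= Q2R (qmax a b).
Proof. unfold qmax. destruct (Qle_bool a b) eqn:E; [|lra].
  apply Qle_Rle. apply Qle_bool_iff. exact E. Qed.
Lemma qmax_ge2 a b : Q2R b <= Q2R (qmax a b).
Proof. unfold qmax. destruct (Qle_bool a b) eqn:E; [lra|].
  apply Rlt_le, Qlt_Rlt. apply Qnot_le_lt. intro H. apply Qle_bool_iff in H. congruence. Qed.

Lemma mul_bounds a b c d x y : a <= x <= b -> c <= y <= d ->
  Rmin (Rmin (a*c) (a*d)) (Rmin (b*c) (b*d)) <= x*y <=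
  Rmax (Rmax (a*c) (a*d)) (Rmax (b*c) (b*d)).
Proof.
  intros [H1 H2] [H3 H4].
  assert (Hy : Rmin (a*y) (b*y) <= x*y <= Rmax (a*y) (b*y)).
  { destruct (Rle_dec 0 y).
    - split; [apply Rle_trans with (a*y); [apply Rmin_l| nra] | apply Rle_trans with (b*y); [nra|apply Rmax_r]].
    - split; [apply Rle_trans with (b*y); [apply Rmin_r| nra] | apply Rle_trans with (a*y); [nra|apply Rmax_l]]. }
  assert (Ha : Rmin (a*c) (a*d) <= a*y <= Rmax (a*c) (a*d)).
  { destruct (Rle_dec 0 a).
    - split; [apply Rle_trans with (a*c); [apply Rmin_l| nra] | apply Rle_trans with (a*d); [nra|apply Rmax_r]].
    - split; [apply Rle_trans with (a*d); [apply Rmin_r| nra] | apply Rle_trans with (a*c); [nra|apply Rmax_l]]. }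
  assert (Hb : Rmin (b*c) (b*d) <= b*y <= Rmax (b*c) (b*d)).
  { destruct (Rle_dec 0 b).
    - split; [apply Rle_trans with (b*c); [apply Rmin_l| nra] | apply Rle_trans with (b*d); [nra|apply Rmax_r]].
    - split; [apply Rle_trans with (b*d); [apply Rmin_r| nra] | apply Rle_trans with (b*c); [nra|apply Rmax_l]]. }
  unfold Rmin, Rmax in *.
  repeat match goal with |- context [Rle_dec ?a ?b] => destruct (Rle_dec a b) end;
  repeat match goal with H : context [Rle_dec ?a ?b] |- _ => destruct (Rle_dec a b) end; lra.
Qed.

Definition Itv := (Q * Q)%type.

Fixpoint iev (b : nat -> Itv) (t : T) : Itv :=
  match t with
  | Kq q => (q, q)
  | Vr n => b n
  | Ad s u => let (l1,h1) := iev b s in let (l2,h2) := iev b u in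
               (rdn (l1 + l2), rup (h1 + h2))
  | Mu s u => let (l1,h1) := iev b s in let (l2,h2) := iev b u in
               (rdn (qmin (qmin (l1*l2) (l1*h2)) (qmin (h1*l2) (h1*h2))),
                rup (qmax (qmax (l1*l2) (l1*h2)) (qmax (h1*l2) (h1*h2))))
  | Op s => let (l,h) := iev b s in (Qopp h, Qopp l)
  end%Q.

Definition inI (i : Itv) (x : R) := Q2R (fst i) <= x <= Q2R (snd i).

Lemma iev_sound b e : (forall n, inI (b n) (e n)) -> forall t, inI (iev b t) (ev e t).
Proof.
  intros Hb t; induction t as [q|n|s IHs u IHu|s IHs u IHu|s IHs]; simpl.
  - unfold inI; simpl; lra.
  - apply Hb.
  - destruct (iev b s) as [l1 h1]; destruct (iev b u) as [l2 h2].
    unfold inI in *; simpl in *.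
    pose proof (rdn_le (l1+l2)); pose proof (rup_le (h1+h2)).
    rewrite Q2R_plus in *. lra.
  - destruct (iev b s) as [l1 h1]; destruct (iev b u) as [l2 h2].
    unfold inI in *; simpl in *.
    pose proof (mul_bounds _ _ _ _ _ _ IHs IHu) as [M1 M2].
    pose proof (rdn_le (qmin (qmin (l1*l2) (l1*h2)) (qmin (h1*l2) (h1*h2)))).
    pose proof (rup_le (qmax (qmax (l1*l2) (l1*h2)) (qmax (h1*l2) (h1*h2)))).
    split.
    + eapply Rle_trans; [apply H|]. eapply Rle_trans; [|apply M1].
      repeat rewrite Q2R_mult in *.
      pose proof (qmin_le1 (qmin (l1*l2) (l1*h2)) (qmin (h1*l2) (h1*h2))).
      pose proof (qmin_le2 (qmin (l1*l2) (l1*h2)) (qmin (h1*l2) (h1*h2))).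
      pose proof (qmin_le1 (l1*l2) (l1*h2)). pose proof (qmin_le2 (l1*l2) (l1*h2)).
      pose proof (qmin_le1 (h1*l2) (h1*h2)). pose proof (qmin_le2 (h1*l2) (h1*h2)).
      repeat rewrite Q2R_mult in *.
      unfold Rmin; repeat destruct Rle_dec; lra.
    + eapply Rle_trans; [|apply H0]. eapply Rle_trans; [apply M2|].
      pose proof (qmax_ge1 (qmax (l1*l2) (l1*h2)) (qmax (h1*l2) (h1*h2))).
      pose proof (qmax_ge2 (qmax (l1*l2) (l1*h2)) (qmax (h1*l2) (h1*h2))).
      pose proof (qmax_ge1 (l1*l2) (l1*h2)). pose proof (qmax_ge2 (l1*l2) (l1*h2)).
      pose proof (qmax_ge1 (h1*l2) (h1*h2)). pose proof (qmax_ge2 (h1*l2) (h1*h2)).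
      repeat rewrite Q2R_mult in *.
      unfold Rmax; repeat destruct Rle_dec; lra.
  - destruct (iev b s) as [l h]. unfold inI in *; simpl in *.
    rewrite !Q2R_opp. lra.
Qed.

Definition isZ (t:T) : bool := match t with Kq q => Qeq_bool q 0 | _ => false end.
Definition isO (t:T) : bool := match t with Kq q => Qeq_bool q 1 | _ => false end.

Lemma isZ_ev e t : isZ t = true -> ev e t = 0.
Proof. destruct t; simpl; try discriminate. intro H. apply Qeq_bool_iff in H.
  rewrite (Qeq_eqR _ _ H). unfold Q2R; simpl; lra. Qed.
Lemma isO_ev e t : isO t = true -> ev e t = 1.
Proof. destruct t; simpl; try discriminate. intro H. apply Qeq_bool_iff in H.
  rewrite (Qeq_eqR _ _ H). unfold Q2R; simpl; lra. Qed.

Definition mkAdd a b := if isZ a then b else if isZ b then a else Ad a b.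
Definition mkMul a b := if isZ a then Kq 0%Q else if isZ b then Kq 0%Q else
  if isO a then b else if isO b then a else Mu a b.
Definition mkOpp a := if isZ a then Kq 0%Q else Op a.

Lemma mkAdd_ev e a b : ev e (mkAdd a b) = ev e a + ev e b.
Proof. unfold mkAdd. destruct (isZ a) eqn:A. rewrite (isZ_ev e a A); lra.
  destruct (isZ b) eqn:B. rewrite (isZ_ev e b B); lra. reflexivity. Qed.
Lemma mkMul_ev e a b : ev e (mkMul a b) = ev e a * ev e b.
Proof. unfold mkMul. destruct (isZ a) eqn:A. rewrite (isZ_ev e a A). unfold ev, Q2R; simpl; lra.
  destruct (isZ b) eqn:B. rewrite (isZ_ev e b B). unfold ev, Q2R; simpl; lra.
  destruct (isO a) eqn:C. rewrite (isO_ev e a C); lra.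
  destruct (isO b) eqn:D. rewrite (isO_ev e b D); lra. reflexivity. Qed.
Lemma mkOpp_ev e a : ev e (mkOpp a) = - ev e a.
Proof. unfold mkOpp. destruct (isZ a) eqn:A. rewrite (isZ_ev e a A). unfold ev, Q2R; simpl; lra.
  reflexivity. Qed.

Definition cube (t:T) := Mu t (Mu t t).

Definition dvar_x (n:nat) : T :=
  match n with
  | 0%nat => Kq 1%Q
  | 2%nat => Op (Mu (Ad (Vr 0) (Vr 4)) (cube (Vr 2)))
  | 3%nat => Op (Mu (Ad (Ad (Vr 0) (Vr 4)) (Kq (-1)%Q)) (cube (Vr 3)))
  | _ => Kq 0%Q
  end.
Definition dvar_y (n:nat) : T :=
  match n with
  | 1%nat => Kq 1%Q
  | 2%nat => Op (Mu (Vr 1) (cube (Vr 2)))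
  | 3%nat => Op (Mu (Vr 1) (cube (Vr 3)))
  | _ => Kq 0%Q
  end.

Fixpoint dt (dv : nat -> T) (t:T) : T :=
  match t with
  | Kq _ => Kq 0%Q
  | Vr n => dv n
  | Ad a b => mkAdd (dt dv a) (dt dv b)
  | Mu a b => mkAdd (mkMul (dt dv a) b) (mkMul a (dt dv b))
  | Op a => mkOpp (dt dv a)
  end.

Lemma dt_sound (dv : nat -> T) (E : R -> nat -> R) (x : R) :
  (forall n, derivable_pt_lim (fun s => E s n) x (ev (E x) (dv n))) ->
  forall t, derivable_pt_lim (fun s => ev (E s) t) x (ev (E x) (dt dv t)).
Proof.
  intros Hv t; induction t as [q|n|a IHa b IHb|a IHa b IHb|a IHa]; simpl.
  - replace (Q2R 0) with 0 by (unfold Q2R; simpl; lra).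
    apply (derivable_pt_lim_const (Q2R q)).
  - apply Hv.
  - rewrite mkAdd_ev. apply (derivable_pt_lim_plus (fun s => ev (E s) a) (fun s => ev (E s) b)); assumption.
  - rewrite mkAdd_ev, !mkMul_ev.
    apply (derivable_pt_lim_mult (fun s => ev (E s) a) (fun s => ev (E s) b)); assumption.
  - rewrite mkOpp_ev. apply (derivable_pt_lim_opp (fun s => ev (E s) a)); assumption.
Qed.

Definition env (x y : R) : nat -> R := fun n =>
  match n with
  | 0%nat => x | 1%nat => y | 2%nat => / rho1 mu0 x y | 3%nat => / rho2 mu0 x y | 4%nat => mu0 | _ => / c0 ^ 2
  end.

Lemma Q2R_m1 : Q2R (-1) = -1. Proof. unfold Q2R; simpl; lra. Qed.
Lemma Q2R_1 : Q2R 1 = 1. Proof. unfold Q2R; simpl; lra. Qed.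
Lemma Q2R_0 : Q2R 0 = 0. Proof. unfold Q2R; simpl; lra. Qed.

Lemma sq1 (z:R) : z * (z * 1) = z ^ 2. Proof. ring. Qed.

Lemma dvx_sound x y : 0 < (x + mu0)^2 + y^2 -> 0 < (x + mu0 - 1)^2 + y^2 ->
  forall n, derivable_pt_lim (fun s => env s y n) x (ev (env x y) (dvar_x n)).
Proof.
  intros H1 H2 n.
  destruct n as [|[|[|[|n]]]]; simpl; rewrite ?Q2R_1, ?Q2R_0, ?Q2R_m1.
  - apply derivable_pt_lim_id.
  - apply (derivable_pt_lim_const y).
  - apply is_derive_Reals. unfold rho1.
    assert (Hs : sqrt ((x + mu0)^2 + y^2) <> 0) by (apply Rgt_not_eq, sqrt_lt_R0; lra).
    auto_derive; rewrite ?sq1.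
    + split; [lra|split;auto].
    + field; auto.
  - apply is_derive_Reals. unfold rho2.
    assert (Hs : sqrt ((x + mu0 - 1)^2 + y^2) <> 0) by (apply Rgt_not_eq, sqrt_lt_R0; lra).
    auto_derive; rewrite ?sq1; replace (x + mu0 + - (1)) with (x + mu0 - 1) by ring.
    + split; [lra|split;auto].
    + field; auto.
  - destruct n as [|n]; apply derivable_pt_lim_const.
Qed.

Lemma dvy_sound x y : 0 < (x + mu0)^2 + y^2 -> 0 < (x + mu0 - 1)^2 + y^2 ->
  forall n, derivable_pt_lim (fun s => env x s n) y (ev (env x y) (dvar_y n)).
Proof.
  intros H1 H2 n.
  destruct n as [|[|[|[|n]]]]; simpl; rewrite ?Q2R_1, ?Q2R_0, ?Q2R_m1.
  - apply (derivable_pt_lim_const x).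
  - apply derivable_pt_lim_id.
  - apply is_derive_Reals. unfold rho1.
    assert (Hs : sqrt ((x + mu0)^2 + y^2) <> 0) by (apply Rgt_not_eq, sqrt_lt_R0; lra).
    auto_derive; rewrite ?sq1.
    + split; [lra|split;auto].
    + field; auto.
  - apply is_derive_Reals. unfold rho2.
    assert (Hs : sqrt ((x + mu0 - 1)^2 + y^2) <> 0) by (apply Rgt_not_eq, sqrt_lt_R0; lra).
    auto_derive; rewrite ?sq1; try replace (x + mu0 + - (1)) with (x + mu0 - 1) by ring.
    + split; [lra|split;auto].
    + field; auto.
  - destruct n as [|n]; apply derivable_pt_lim_const.
Qed.

Definition X := Vr 0. Definition Y := Vr 1. Definition U := Vr 2. Definition Vv := Vr 3.
Definition M := Vr 4. Definition K := Vr 5.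
Definition c (q:Q) := Kq q.
Definition sb a b := Ad a (Op b).
Definition PP := Ad (Mu X X) (Mu Y Y).
Definition om := sb (c 1) M.
Definition S1 := Ad (Mu om U) (Mu M Vv).
Definition Wone :=
  Ad (Ad (Ad (Ad
   (Mu (Op (c (3#2))) (Mu (sb (c 1) (Mu (Mu (c (1#3)) M) om)) PP))
   (Mu (c (1#8)) (Mu PP PP)))
   (Mu (c (3#2)) (Mu S1 PP)))
   (Op (Mu (c (1#2)) (Ad (Mu (Mu om om) (Mu U U)) (Mu (Mu M M) (Mu Vv Vv))))))
   (Mu (Mu M om)
     (Ad (Ad (Ad (sb
       (Mu (Mu (c (7#2)) X) (sb U Vv))
       (Mu (Mu (c (1#2)) (Mu Y Y)) (Ad (Mu M (cube U)) (Mu om (cube Vv)))))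
       (Mu (Mu (sb (Mu (c 3) M) (c 2)) (c (1#2))) U))
       (Op (Mu U Vv)))
       (Mu (Mu (sb (c 1) (Mu (c 3) M)) (c (1#2))) Vv))).
Definition Wtree :=
  Ad (Ad (Ad (Mu (c (1#2)) PP) (Mu om U)) (Mu M Vv)) (Mu K Wone).

Lemma W_eq x y : rho1 mu0 x y <> 0 -> rho2 mu0 x y <> 0 ->
  w mu0 c0 x 0 y 0 = ev (env x y) Wtree.
Proof.
  intros H1 H2.
  unfold w, w0, w1, Vfun.
  assert (Hr : rho x y ^ 2 = x^2 + y^2).
  { unfold rho. apply pow2_sqrt. nra. }
  rewrite Hr. simpl. unfold Q2R; simpl.
  field. repeat split; auto.
  unfold c0. intro Hc.
  assert (0 < sqrt (1495978707 / 3317816087784734)) by (apply sqrt_lt_R0; lra).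
  nra.
Qed.

Definition Ft := dt dvar_x Wtree.
Definition Gt := dt dvar_y Wtree.
Definition Fxt := dt dvar_x Ft.
Definition Fyt := dt dvar_y Ft.
Definition Gxt := dt dvar_x Gt.
Definition Gyt := dt dvar_y Gt.

Lemma rho1_pos x y : 0 < (x + mu0)^2 + y^2 -> rho1 mu0 x y <> 0.
Proof. intro; unfold rho1; apply Rgt_not_eq, sqrt_lt_R0; auto. Qed.
Lemma rho2_pos x y : 0 < (x + mu0 - 1)^2 + y^2 -> rho2 mu0 x y <> 0.
Proof. intro; unfold rho2; apply Rgt_not_eq, sqrt_lt_R0; auto. Qed.

Lemma is_f_F x y : 0 < y -> is_f mu0 c0 x y (ev (env x y) Ft).
Proof.
  intro Hy. unfold is_f. apply is_derive_Reals.
  assert (Y2 : 0 < y ^ 2) by (apply pow_lt; lra).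
  apply is_derive_ext with (f := fun s => ev (env s y) Wtree).
  { intro s. symmetry. pose proof (pow2_ge_0 (s + mu0)). pose proof (pow2_ge_0 (s + mu0 - 1)).
    apply W_eq; [apply rho1_pos|apply rho2_pos]; lra. }
  apply is_derive_Reals. apply (dt_sound dvar_x (fun s => env s y) x). pose proof (pow2_ge_0 (x + mu0)). pose proof (pow2_ge_0 (x + mu0 - 1)).
  apply dvx_sound; lra.
Qed.

Lemma is_g_G x y : 0 < x -> x + mu0 < 1 -> 0 < mu0 -> is_g mu0 c0 x y (ev (env x y) Gt).
Proof.
  intros Hx Hx1 Hm. unfold is_g. apply is_derive_Reals.
  assert (A1 : 0 < (x + mu0) * (x + mu0)) by (apply Rmult_lt_0_compat; lra).
  assert (A2 : 0 < (1 - (x + mu0)) * (1 - (x + mu0))) by (apply Rmult_lt_0_compat; lra).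
  apply is_derive_ext with (f := fun s => ev (env x s) Wtree).
  { intro s. symmetry. pose proof (pow2_ge_0 s).
    apply W_eq; [apply rho1_pos|apply rho2_pos]; nra. }
  apply is_derive_Reals. apply (dt_sound dvar_y (fun s => env x s) y). pose proof (pow2_ge_0 y). apply dvy_sound; nra.
Qed.

Lemma dFx x y : 0 < y -> derivable_pt_lim (fun s => ev (env s y) Ft) x (ev (env x y) Fxt).
Proof. intro. apply (dt_sound dvar_x (fun s => env s y) x). pose proof (pow2_ge_0 (x + mu0)). pose proof (pow2_ge_0 (x + mu0 - 1)).
  assert (0 < y ^ 2) by (apply pow_lt; lra). apply dvx_sound; lra. Qed.
Lemma dGx x y : 0 < y -> derivable_pt_lim (fun s => ev (env s y) Gt) x (ev (env x y) Gxt).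
Proof. intro. apply (dt_sound dvar_x (fun s => env s y) x). pose proof (pow2_ge_0 (x + mu0)). pose proof (pow2_ge_0 (x + mu0 - 1)).
  assert (0 < y ^ 2) by (apply pow_lt; lra). apply dvx_sound; lra. Qed.
Lemma dFy x y : 0 < y -> derivable_pt_lim (fun s => ev (env x s) Ft) y (ev (env x y) Fyt).
Proof. intro. apply (dt_sound dvar_y (fun s => env x s) y). pose proof (pow2_ge_0 (x + mu0)). pose proof (pow2_ge_0 (x + mu0 - 1)).
  assert (0 < y ^ 2) by (apply pow_lt; lra). apply dvy_sound; lra. Qed.
Lemma dGy x y : 0 < y -> derivable_pt_lim (fun s => ev (env x s) Gt) y (ev (env x y) Gyt).
Proof. intro. apply (dt_sound dvar_y (fun s => env x s) y). pose proof (pow2_ge_0 (x + mu0)). pose proof (pow2_ge_0 (x + mu0 - 1)).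
  assert (0 < y ^ 2) by (apply pow_lt; lra). apply dvy_sound; lra. Qed.

Definition muq : Q := 59729 # 19885499729.
Definition kq : Q := (100 * 3317816087784734 # 1) / (149896229 * 149896229 * 1495978707 # 1).
Definition x1q : Q := 312498189077 # 625000000000.
Definition x2q : Q := 312498095327 # 625000000000.
Definition y1q : Q := 4330127145451 # 5000000000000.
Definition y3q : Q := 43301267124383 # 50000000000000.
Lemma muq_eq : Q2R muq = mu0. Proof. unfold Q2R, mu0; simpl. lra. Qed.
Lemma x1q_eq : Q2R x1q = x1. Proof. unfold Q2R, x1; simpl. lra. Qed.
Lemma x2q_eq : Q2R x2q = x2. Proof. unfold Q2R, x2; simpl. lra. Qed.
Lemma y1q_eq : Q2R y1q = y1. Proof. unfold Q2R, y1; simpl. lra. Qed.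
Lemma y3q_eq : Q2R y3q = y3. Proof. unfold Q2R, y3; simpl. lra. Qed.
Lemma kq_eq : Q2R kq = / c0 ^ 2.
Proof.
  unfold c0. rewrite Rpow_mult_distr, pow2_sqrt by lra.
  unfold kq, Q2R. simpl. field.
Qed.

Lemma inv_sqrt_gen (zl zh yl yh ul uh : Q) z y :
  0 <= Q2R zl -> 0 <= Q2R yl -> Q2R zl <= z <= Q2R zh -> Q2R yl <= y <= Q2R yh ->
  (0 < ul)%Q -> (0 < uh)%Q -> (ul*ul*(zh*zh+yh*yh) <= 1)%Q -> (1 <= uh*uh*(zl*zl+yl*yl))%Q ->
  (0 < zl*zl+yl*yl)%Q ->
  Q2R ul <= / sqrt (z^2+y^2) <= Q2R uh.
Proof.
  intros H1 H2 H3 H4 H5 H9 H6 H7 H8.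
  apply Qlt_Rlt in H9. rewrite Q2R_0 in H9. apply Qlt_Rlt in H5. apply Qle_Rle in H6. apply Qle_Rle in H7. apply Qlt_Rlt in H8.
  rewrite Q2R_0 in H5, H8. rewrite Q2R_1 in H6, H7.
  repeat (rewrite Q2R_plus in H6 || rewrite Q2R_mult in H6).
  repeat (rewrite Q2R_plus in H7 || rewrite Q2R_mult in H7).
  repeat (rewrite Q2R_plus in H8 || rewrite Q2R_mult in H8).
  set (A := z^2 + y^2) in *.
  assert (HAl : Q2R zl * Q2R zl + Q2R yl * Q2R yl <= A) by (unfold A; nra).
  assert (HAh : A <= Q2R zh * Q2R zh + Q2R yh * Q2R yh) by (unfold A; nra).
  assert (HA : 0 < A) by lra.
  pose proof (sqrt_lt_R0 A HA) as Hs. pose proof (pow2_sqrt A (Rlt_le _ _ HA)) as Hs2.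
  set (s := sqrt A) in *.
  assert (Q2R ul * s <= 1 -> Q2R ul <= / s) as Ha.
  { intro. apply Rmult_le_reg_r with s; auto. rewrite Rinv_l; lra. }
  split.
  - apply Ha.
    destruct (Rle_dec (Q2R ul * s) 1) as [|n]; auto. exfalso.
    assert (1 < (Q2R ul * s) * (Q2R ul * s)) by nra.
    assert ((Q2R ul * s) * (Q2R ul * s) = Q2R ul * Q2R ul * A) by (rewrite <- Hs2; ring).
    assert (0 <= Q2R ul * Q2R ul * ((Q2R zh * Q2R zh + Q2R yh * Q2R yh) - A)) by (apply Rmult_le_pos; nra).
    nra.
  - apply Rmult_le_reg_r with s; auto. rewrite Rinv_l by lra.
    destruct (Rle_dec 1 (Q2R uh * s)) as [|n]; auto. exfalso.
    assert ((Q2R uh * s) * (Q2R uh * s) = Q2R uh * Q2R uh * A) by (rewrite <- Hs2; ring).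
    assert (0 <= Q2R uh * s) by (apply Rmult_le_pos; lra).
    assert ((Q2R uh * s) * (Q2R uh * s) < 1) by nra.
    assert (0 <= Q2R uh * Q2R uh * (A - (Q2R zl * Q2R zl + Q2R yl * Q2R yl))) by (apply Rmult_le_pos; nra).
    nra.
Qed.


Ltac qchk := vm_compute; first [reflexivity | intro; discriminate].

Lemma u_box (xl xh yl yh ul uh : Q) x y : Q2R xl <= x <= Q2R xh -> Q2R yl <= y <= Q2R yh ->
  (0 <= xl + muq)%Q -> (0 <= yl)%Q -> (0 < ul)%Q -> (0 < uh)%Q ->
  (ul*ul*((xh+muq)*(xh+muq)+yh*yh) <= 1)%Q -> (1 <= uh*uh*((xl+muq)*(xl+muq)+yl*yl))%Q ->
  (0 < (xl+muq)*(xl+muq)+yl*yl)%Q -> inI (ul, uh) (/ rho1 mu0 x y).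
Proof.
  intros Hx Hy H1 H2 H3 H4 H5 H6 H7. unfold inI, rho1; cbn [fst snd].
  apply inv_sqrt_gen with (zl := (xl + muq)%Q) (zh := (xh + muq)%Q) (yl := yl) (yh := yh); auto.
  - apply Qle_Rle in H1. rewrite Q2R_0 in H1. exact H1.
  - apply Qle_Rle in H2. rewrite Q2R_0 in H2. exact H2.
  - rewrite !Q2R_plus, muq_eq. lra.
Qed.

Lemma v_box (xl xh yl yh ul uh : Q) x y : Q2R xl <= x <= Q2R xh -> Q2R yl <= y <= Q2R yh ->
  (0 <= 1 - muq - xh)%Q -> (0 <= yl)%Q -> (0 < ul)%Q -> (0 < uh)%Q ->
  (ul*ul*((1-muq-xl)*(1-muq-xl)+yh*yh) <= 1)%Q -> (1 <= uh*uh*((1-muq-xh)*(1-muq-xh)+yl*yl))%Q ->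
  (0 < (1-muq-xh)*(1-muq-xh)+yl*yl)%Q -> inI (ul, uh) (/ rho2 mu0 x y).
Proof.
  intros Hx Hy H1 H2 H3 H4 H5 H6 H7. unfold inI, rho2; cbn [fst snd].
  replace ((x + mu0 - 1)^2) with ((1 - mu0 - x)^2) by ring.
  apply inv_sqrt_gen with (z := 1 - mu0 - x) (zl := (1 - muq - xh)%Q) (zh := (1 - muq - xl)%Q) (yl := yl) (yh := yh); auto.
  - apply Qle_Rle in H1. rewrite Q2R_0 in H1. exact H1.
  - apply Qle_Rle in H2. rewrite Q2R_0 in H2. exact H2.
  - unfold Qminus. rewrite !Q2R_plus, !Q2R_opp, muq_eq, Q2R_1. lra.
Qed.

Definition inR x y := x2 <= x <= x1 /\ y3 <= y <= y1.


Definition fl (E a : Z) : Z := Z.shiftr a E.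
Definition cl (E a : Z) : Z := (- Z.shiftr (- a) E)%Z.

Lemma fl_le E a : (0 <= E)%Z -> (fl E a * 2^E <= a)%Z.
Proof. intro. unfold fl. rewrite Z.shiftr_div_pow2 by auto. rewrite Z.mul_comm. apply Z.mul_div_le. apply Z.pow_pos_nonneg; lia. Qed.
Lemma cl_ge E a : (0 <= E)%Z -> (a <= cl E a * 2^E)%Z.
Proof. intro. pose proof (fl_le E (-a) H). unfold cl, fl in *. lia. Qed.

Definition ZI := (Z * Z)%type.

Fixpoint fev (E : Z) (b : nat -> ZI) (t : T) : ZI :=
  match t with
  | Kq q => (((Qnum q * 2^E) / Zpos (Qden q))%Z, (- ((- (Qnum q * 2^E)) / Zpos (Qden q)))%Z)
  | Vr n => b n
  | Ad s u => let (l1,h1) := fev E b s in let (l2,h2) := fev E b u in (l1 + l2, h1 + h2)%Z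
  | Mu s u => let (l1,h1) := fev E b s in let (l2,h2) := fev E b u in
      let p1 := (l1*l2)%Z in let p2 := (l1*h2)%Z in let p3 := (h1*l2)%Z in let p4 := (h1*h2)%Z in
      (fl E (Z.min (Z.min p1 p2) (Z.min p3 p4)), cl E (Z.max (Z.max p1 p2) (Z.max p3 p4)))
  | Op s => let (l,h) := fev E b s in (-h, -l)%Z
  end.

Definition vl (E z : Z) : R := IZR z / IZR (2^E).
Definition inZ (E : Z) (i : ZI) (x : R) := vl E (fst i) <= x <= vl E (snd i).

Lemma pow2pos E : (0 <= E)%Z -> 0 < IZR (2^E).
Proof. intro. apply IZR_lt. apply Z.pow_pos_nonneg; lia. Qed.

Lemma fev_sound E b e : (0 <= E)%Z -> (forall n, inZ E (b n) (e n)) -> forall t, inZ E (fev E b t) (ev e t).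
Proof.
  intros HE Hb t. pose proof (pow2pos E HE) as HS. set (S := IZR (2^E)) in *.
  induction t as [q|n|s IHs u IHu|s IHs u IHu|s IHs]; simpl.
  - unfold inZ, vl; simpl. fold S. destruct q as [qn qd]. unfold Q2R; simpl.
    assert (Hd : (0 < Zpos qd)%Z) by lia.
    pose proof (Z.mul_div_le (qn * 2^E) (Zpos qd) Hd) as H1.
    pose proof (Z.mul_div_le (- (qn * 2^E)) (Zpos qd) Hd) as H2.
    apply IZR_le in H1. apply IZR_le in H2.
    assert (EQ : IZR (qn * 2^E) = IZR qn * S) by (rewrite mult_IZR; reflexivity).
    rewrite mult_IZR in H1, H2. rewrite EQ in H1. rewrite opp_IZR, EQ in H2.
    rewrite opp_IZR. set (D := IZR (Zpos qd)) in *.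
    assert (0 < D) by (apply IZR_lt; lia).
    split.
    + apply Rmult_le_reg_r with (S * D); [nra|].
      replace (IZR ((qn * 2 ^ E) / Z.pos qd) / S * (S * D)) with (D * IZR ((qn * 2 ^ E) / Z.pos qd)) by (field; lra).
      replace (IZR qn * / D * (S * D)) with (IZR qn * S) by (field; lra). exact H1.
    + apply Rmult_le_reg_r with (S * D); [nra|].
      replace (- IZR (- (qn * 2 ^ E) / Z.pos qd) / S * (S * D)) with (- (D * IZR (- (qn * 2 ^ E) / Z.pos qd))) by (field; lra).
      replace (IZR qn * / D * (S * D)) with (IZR qn * S) by (field; lra). lra.
  - apply Hb.
  - destruct (fev E b s) as [l1 h1]; destruct (fev E b u) as [l2 h2].
    unfold inZ, vl in *; simpl in *. rewrite !plus_IZR. fold S in IHs; fold S in IHu; fold S.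
    unfold Rdiv in *. lra.
  - destruct (fev E b s) as [l1 h1]; destruct (fev E b u) as [l2 h2].
    unfold inZ, vl in *; simpl in *. fold S in IHs; fold S in IHu; fold S.
    pose proof (mul_bounds _ _ _ _ _ _ IHs IHu) as [M1 M2].
    set (mn := Z.min (Z.min (l1 * l2) (l1 * h2)) (Z.min (h1 * l2) (h1 * h2))%Z).
    set (mx := Z.max (Z.max (l1 * l2) (l1 * h2)) (Z.max (h1 * l2) (h1 * h2))%Z).
    pose proof (fl_le E mn HE) as F1. pose proof (cl_ge E mx HE) as C1.
    apply IZR_le in F1. apply IZR_le in C1. rewrite mult_IZR in F1, C1. fold S in F1, C1.
    assert (Hmn : forall p, In p [(l1*l2)%Z; (l1*h2)%Z; (h1*l2)%Z; (h1*h2)%Z] -> IZR mn <= IZR p).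
    { intros p Hp. apply IZR_le. unfold mn. simpl in Hp. lia. }
    assert (Hmx : forall p, In p [(l1*l2)%Z; (l1*h2)%Z; (h1*l2)%Z; (h1*h2)%Z] -> IZR p <= IZR mx).
    { intros p Hp. apply IZR_le. unfold mx. simpl in Hp. lia. }
    simpl in Hmn, Hmx.
    pose proof (Hmn _ (or_introl eq_refl)) as A1. pose proof (Hmn _ (or_intror (or_introl eq_refl))) as A2.
    pose proof (Hmn _ (or_intror (or_intror (or_introl eq_refl)))) as A3.
    pose proof (Hmn _ (or_intror (or_intror (or_intror (or_introl eq_refl))))) as A4.
    pose proof (Hmx _ (or_introl eq_refl)) as B1. pose proof (Hmx _ (or_intror (or_introl eq_refl))) as B2.
    pose proof (Hmx _ (or_intror (or_intror (or_introl eq_refl)))) as B3.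
    pose proof (Hmx _ (or_intror (or_intror (or_intror (or_introl eq_refl))))) as B4.
    rewrite !mult_IZR in A1, A2, A3, A4, B1, B2, B3, B4.
    assert (HS2 : 0 < S * S) by nra.
    assert (Lo : IZR mn / (S*S) <= Rmin (Rmin (IZR l1 / S * (IZR l2 / S)) (IZR l1 / S * (IZR h2 / S)))
                     (Rmin (IZR h1 / S * (IZR l2 / S)) (IZR h1 / S * (IZR h2 / S)))).
    { repeat apply Rmin_glb; apply Rmult_le_reg_r with (S*S); auto; field_simplify; try lra; auto. }
    assert (Hi : Rmax (Rmax (IZR l1 / S * (IZR l2 / S)) (IZR l1 / S * (IZR h2 / S)))
                     (Rmax (IZR h1 / S * (IZR l2 / S)) (IZR h1 / S * (IZR h2 / S))) <= IZR mx / (S*S)).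
    { repeat apply Rmax_lub; apply Rmult_le_reg_r with (S*S); auto; field_simplify; try lra; auto. }
    split.
    + apply Rle_trans with (IZR mn / (S*S)); [|lra].
      apply Rmult_le_reg_r with (S*S); auto. field_simplify; try lra; nra.
    + apply Rle_trans with (IZR mx / (S*S)); [lra|].
      apply Rmult_le_reg_r with (S*S); auto. field_simplify; try lra; nra.
  - destruct (fev E b s) as [l h]. unfold inZ, vl in *; simpl in *. rewrite !opp_IZR.
    unfold Rdiv in *. lra.
Qed.

Definition mkf (xi yi ui vi mi ki : ZI) : nat -> ZI := fun n =>
  match n with 0%nat => xi | 1%nat => yi | 2%nat => ui | 3%nat => vi | 4%nat => mi | _ => ki end.

Lemma vl_Q E p z : (2^E)%Z = Zpos p -> vl E z = Q2R (z # p).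
Proof. intro H. unfold vl, Q2R; simpl. rewrite H. reflexivity. Qed.

Lemma inZ_Q E p lo hi (ql qh : Q) r : (2^E)%Z = Zpos p -> Q2R ql <= r <= Q2R qh ->
  (lo # p <= ql)%Q -> (qh <= hi # p)%Q -> inZ E (lo, hi) r.
Proof.
  intros HE Hr H1 H2. unfold inZ; simpl. rewrite !(vl_Q E p) by auto.
  apply Qle_Rle in H1. apply Qle_Rle in H2. lra.
Qed.

Lemma env_fbox E xi yi ui vi mi ki x y : inZ E xi x -> inZ E yi y -> inZ E ui (/ rho1 mu0 x y) ->
  inZ E vi (/ rho2 mu0 x y) -> inZ E mi mu0 -> inZ E ki (/ c0 ^ 2) ->
  forall n, inZ E (mkf xi yi ui vi mi ki n) (env x y n).
Proof.
  intros Hx Hy Hu Hv Hm Hk n. destruct n as [|[|[|[|[|n]]]]]; simpl; auto.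
Qed.

Lemma chk E b e t lo hi : (0 <= E)%Z -> (forall n, inZ E (b n) (e n)) ->
  (let i := fev E b t in Z.leb lo (fst i) && Z.leb (snd i) hi) = true ->
  vl E lo <= ev e t <= vl E hi.
Proof.
  intros HE Hb H. pose proof (fev_sound E b e HE Hb t) as [A B]. simpl in H.
  apply andb_prop in H as [H1 H2]. apply Z.leb_le, IZR_le in H1. apply Z.leb_le, IZR_le in H2.
  pose proof (pow2pos E HE). unfold vl in *.
  split.
  - apply Rle_trans with (IZR (fst (fev E b t)) / IZR (2^E)); auto.
    unfold Rdiv; apply Rmult_le_compat_r; auto. left; apply Rinv_0_lt_compat; auto.
  - apply Rle_trans with (IZR (snd (fev E b t)) / IZR (2^E)); auto.
    unfold Rdiv; apply Rmult_le_compat_r; auto. left; apply Rinv_0_lt_compat; auto.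
Qed.

Definition BBf := mkf (536867639, 536867801)%Z (929887630, 929887724)%Z (1073741742, 1073741906)%Z (1073741775, 1073741939)%Z (3225, 3226)%Z (10, 11)%Z.
Definition B13f := mkf (9223318587841786697, 9223318587841786698)%Z (15975347854216526861, 15975347854216526862)%Z (18446744073709610393, 18446744073709610396)%Z (18446746032184388560, 18446746032184388563)%Z (55407487455383, 55407487455384)%Z (182081240946, 182081240947)%Z.
Definition B21f := mkf (9223315820830175640, 9223315820830175641)%Z (15975349451751418375, 15975349451751418376)%Z (18446744073709731433, 18446744073709731436)%Z (18446743265172639807, 18446743265172639810)%Z (55407487455383, 55407487455384)%Z (182081240946, 182081240947)%Z.

Lemma mu_in : Q2R muq <= mu0 <= Q2R muq. Proof. rewrite muq_eq; lra. Qed.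
Lemma k_in : Q2R kq <= / c0 ^ 2 <= Q2R kq. Proof. rewrite kq_eq; lra. Qed.

Lemma env_BBf x y : inR x y -> forall n, inZ 30 (BBf n) (env x y n).
Proof.
  intros [Hx Hy].
  rewrite <- x1q_eq, <- x2q_eq in Hx. rewrite <- y1q_eq, <- y3q_eq in Hy.
  apply env_fbox.
  - apply (inZ_Q 30 1073741824 _ _ x2q x1q); auto; qchk.
  - apply (inZ_Q 30 1073741824 _ _ y3q y1q); auto; qchk.
  - unfold inZ; simpl; rewrite !(vl_Q 30 1073741824) by reflexivity.
    apply (u_box x2q x1q y3q y1q); auto; qchk.
  - unfold inZ; simpl; rewrite !(vl_Q 30 1073741824) by reflexivity.
    apply (v_box x2q x1q y3q y1q); auto; qchk.
  - apply (inZ_Q 30 1073741824 _ _ muq muq); [reflexivity|apply mu_in|qchk|qchk].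
  - apply (inZ_Q 30 1073741824 _ _ kq kq); [reflexivity|apply k_in|qchk|qchk].
Qed.

Lemma env_B13f : forall n, inZ 64 (B13f n) (env x1 y3 n).
Proof.
  assert (Hx : Q2R x1q <= x1 <= Q2R x1q) by (rewrite x1q_eq; lra).
  assert (Hy : Q2R y3q <= y3 <= Q2R y3q) by (rewrite y3q_eq; lra).
  apply env_fbox.
  - apply (inZ_Q 64 18446744073709551616 _ _ x1q x1q); auto; qchk.
  - apply (inZ_Q 64 18446744073709551616 _ _ y3q y3q); auto; qchk.
  - unfold inZ; simpl; rewrite !(vl_Q 64 18446744073709551616) by reflexivity.
    apply (u_box x1q x1q y3q y3q); auto; qchk.
  - unfold inZ; simpl; rewrite !(vl_Q 64 18446744073709551616) by reflexivity.
    apply (v_box x1q x1q y3q y3q); auto; qchk.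
  - apply (inZ_Q 64 18446744073709551616 _ _ muq muq); [reflexivity|apply mu_in|qchk|qchk].
  - apply (inZ_Q 64 18446744073709551616 _ _ kq kq); [reflexivity|apply k_in|qchk|qchk].
Qed.

Lemma env_B21f : forall n, inZ 64 (B21f n) (env x2 y1 n).
Proof.
  assert (Hx : Q2R x2q <= x2 <= Q2R x2q) by (rewrite x2q_eq; lra).
  assert (Hy : Q2R y1q <= y1 <= Q2R y1q) by (rewrite y1q_eq; lra).
  apply env_fbox.
  - apply (inZ_Q 64 18446744073709551616 _ _ x2q x2q); auto; qchk.
  - apply (inZ_Q 64 18446744073709551616 _ _ y1q y1q); auto; qchk.
  - unfold inZ; simpl; rewrite !(vl_Q 64 18446744073709551616) by reflexivity.
    apply (u_box x2q x2q y1q y1q); auto; qchk.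
  - unfold inZ; simpl; rewrite !(vl_Q 64 18446744073709551616) by reflexivity.
    apply (v_box x2q x2q y1q y1q); auto; qchk.
  - apply (inZ_Q 64 18446744073709551616 _ _ muq muq); [reflexivity|apply mu_in|qchk|qchk].
  - apply (inZ_Q 64 18446744073709551616 _ _ kq kq); [reflexivity|apply k_in|qchk|qchk].
Qed.

Lemma vl30 z : vl 30 z = IZR z / 1073741824.
Proof. unfold vl. reflexivity. Qed.
Lemma vl64 z : vl 64 z = IZR z / 18446744073709551616.
Proof. unfold vl. reflexivity. Qed.

Lemma Fx_bd x y : inR x y -> 7/10 <= ev (env x y) Fxt <= 3.
Proof. intro H. pose proof (chk 30 BBf (env x y) Fxt 751619277 3221225472 ltac:(lia) (env_BBf x y H) ltac:(vm_compute; reflexivity)) as A.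
  rewrite !vl30 in A. lra. Qed.
Lemma Fy_bd x y : inR x y -> 1/10 <= ev (env x y) Fyt <= 3.
Proof. intro H. pose proof (chk 30 BBf (env x y) Fyt 107374183 3221225472 ltac:(lia) (env_BBf x y H) ltac:(vm_compute; reflexivity)) as A.
  rewrite !vl30 in A. lra. Qed.
Lemma Gx_bd x y : inR x y -> 1/10 <= ev (env x y) Gxt <= 3.
Proof. intro H. pose proof (chk 30 BBf (env x y) Gxt 107374183 3221225472 ltac:(lia) (env_BBf x y H) ltac:(vm_compute; reflexivity)) as A.
  rewrite !vl30 in A. lra. Qed.
Lemma Gy_bd x y : inR x y -> -3 <= ev (env x y) Gyt <= 3.
Proof. intro H. pose proof (chk 30 BBf (env x y) Gyt (-3221225472) 3221225472 ltac:(lia) (env_BBf x y H) ltac:(vm_compute; reflexivity)) as A.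
  rewrite !vl30 in A. lra. Qed.
Lemma F13 : 1/10000000000000 <= ev (env x1 y3) Ft <= 1.
Proof. pose proof (chk 64 B13f (env x1 y3) Ft 1844675 18446744073709551616 ltac:(lia) env_B13f ltac:(vm_compute; reflexivity)) as A.
  rewrite !vl64 in A. lra. Qed.
Lemma G13 : -1 <= ev (env x1 y3) Gt <= -1/10000000000000.
Proof. pose proof (chk 64 B13f (env x1 y3) Gt (-18446744073709551616) (-1844675) ltac:(lia) env_B13f ltac:(vm_compute; reflexivity)) as A.
  rewrite !vl64 in A. lra. Qed.
Lemma F21 : -1 <= ev (env x2 y1) Ft <= -1/10000000000000.
Proof. pose proof (chk 64 B21f (env x2 y1) Ft (-18446744073709551616) (-1844675) ltac:(lia) env_B21f ltac:(vm_compute; reflexivity)) as A.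
  rewrite !vl64 in A. lra. Qed.
Lemma G21 : 1/10000000000000 <= ev (env x2 y1) Gt <= 1.
Proof. pose proof (chk 64 B21f (env x2 y1) Gt 1844675 18446744073709551616 ltac:(lia) env_B21f ltac:(vm_compute; reflexivity)) as A.
  rewrite !vl64 in A. lra. Qed.

Definition Ff x y := ev (env x y) Ft.
Definition Gf x y := ev (env x y) Gt.

Lemma x21 : x2 < x1. Proof. unfold x1, x2; lra. Qed.
Lemma y31 : y3 < y1. Proof. unfold y1, y3; lra. Qed.
Lemma y3pos : 0 < y3. Proof. unfold y3; lra. Qed.
Lemma x2pos : 0 < x2. Proof. unfold x2; lra. Qed.
Lemma mu0pos : 0 < mu0. Proof. unfold mu0; lra. Qed.
Lemma x1mu : x1 + mu0 < 1. Proof. unfold x1, mu0; lra. Qed.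

Lemma mvt_bd f f' a b lo hi : a <= b ->
  (forall c, a <= c <= b -> derivable_pt_lim f c (f' c) /\ lo <= f' c <= hi) ->
  lo * (b - a) <= f b - f a <= hi * (b - a).
Proof.
  intros Hab H. destruct (Rle_lt_or_eq_dec _ _ Hab) as [Hlt|Heq].
  - destruct (MVT_cor2 f f' a b Hlt (fun c Hc => proj1 (H c Hc))) as [c [Hc1 Hc2]].
    rewrite Hc1. destruct (H c (conj (Rlt_le _ _ (proj1 Hc2)) (Rlt_le _ _ (proj2 Hc2)))) as [_ [L1 L2]].
    split; apply Rmult_le_compat_r; lra.
  - subst. lra.
Qed.

Lemma mvt_abs f f' l h L a b : l <= a <= h -> l <= b <= h ->
  (forall c, l <= c <= h -> derivable_pt_lim f c (f' c) /\ - L <= f' c <= L) ->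
  Rabs (f b - f a) <= L * Rabs (b - a).
Proof.
  intros Ha Hb H. destruct (Rle_dec a b).
  - pose proof (mvt_bd f f' a b (-L) L r (fun c Hc => H c (conj (Rle_trans _ _ _ (proj1 Ha) (proj1 Hc)) (Rle_trans _ _ _ (proj2 Hc) (proj2 Hb))))).
    rewrite (Rabs_pos_eq (b - a)) by lra. apply Rabs_le. lra.
  - pose proof (mvt_bd f f' b a (-L) L ltac:(lra) (fun c Hc => H c (conj (Rle_trans _ _ _ (proj1 Hb) (proj1 Hc)) (Rle_trans _ _ _ (proj2 Hc) (proj2 Ha))))).
    rewrite (Rabs_left (b - a)) by lra. apply Rabs_le. lra.
Qed.

Lemma mvt_lb f f' l h m a b : 0 <= m -> l <= a <= h -> l <= b <= h ->
  (forall c, l <= c <= h -> derivable_pt_lim f c (f' c) /\ m <= f' c <= m + 100) ->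
  m * Rabs (b - a) <= Rabs (f b - f a).
Proof.
  intros Hm Ha Hb H. destruct (Rle_dec a b).
  - pose proof (mvt_bd f f' a b m (m+100) r (fun c Hc => H c (conj (Rle_trans _ _ _ (proj1 Ha) (proj1 Hc)) (Rle_trans _ _ _ (proj2 Hc) (proj2 Hb))))).
    rewrite (Rabs_pos_eq (b - a)) by lra. rewrite Rabs_pos_eq; nra.
  - pose proof (mvt_bd f f' b a m (m+100) ltac:(lra) (fun c Hc => H c (conj (Rle_trans _ _ _ (proj1 Hb) (proj1 Hc)) (Rle_trans _ _ _ (proj2 Hc) (proj2 Ha))))).
    rewrite (Rabs_left (b - a)) by lra. rewrite (Rabs_left1 (f b - f a)); nra.
Qed.

Lemma Q2R_e (n d : Z) (p : positive) : d = Zpos p -> Q2R (n # p) = IZR n / IZR d.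
Proof. intros ->. reflexivity. Qed.

Lemma Fx_b x y : inR x y -> derivable_pt_lim (fun s => Ff s y) x (ev (env x y) Fxt) /\
  7/10 <= ev (env x y) Fxt <= 7/10 + 100.
Proof.
  intro H. pose proof (Fx_bd x y H).
  split; [apply dFx; unfold Ff, Gf; destruct H as [[? ?] [? ?]]; pose proof y3pos; lra | lra].
Qed.
Lemma Fy_b x y : inR x y -> derivable_pt_lim (fun s => Ff x s) y (ev (env x y) Fyt) /\
  1/10 <= ev (env x y) Fyt <= 3.
Proof.
  intro H. pose proof (Fy_bd x y H).
  split; [apply dFy; unfold Ff, Gf; destruct H as [[? ?] [? ?]]; pose proof y3pos; lra | lra].
Qed.
Lemma Gx_b x y : inR x y -> derivable_pt_lim (fun s => Gf s y) x (ev (env x y) Gxt) /\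
  1/10 <= ev (env x y) Gxt <= 3.
Proof.
  intro H. pose proof (Gx_bd x y H).
  split; [apply dGx; unfold Ff, Gf; destruct H as [[? ?] [? ?]]; pose proof y3pos; lra | lra].
Qed.
Lemma Gy_b x y : inR x y -> derivable_pt_lim (fun s => Gf x s) y (ev (env x y) Gyt) /\
  -3 <= ev (env x y) Gyt <= 3.
Proof.
  intro H. pose proof (Gy_bd x y H).
  split; [apply dGy; unfold Ff, Gf; destruct H as [[? ?] [? ?]]; pose proof y3pos; lra | lra].
Qed.

Lemma F13r : 0 < Ff x1 y3. Proof. pose proof F13. unfold Ff; lra. Qed.
Lemma G13r : Gf x1 y3 < 0. Proof. pose proof G13. unfold Gf; lra. Qed.
Lemma F21r : Ff x2 y1 < 0. Proof. pose proof F21. unfold Ff; lra. Qed.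
Lemma G21r : 0 < Gf x2 y1. Proof. pose proof G21. unfold Gf; lra. Qed.

Lemma E_right y : y3 <= y <= y1 -> 0 < Ff x1 y.
Proof.
  intro Hy. pose proof F13r. pose proof x21.
  pose proof (mvt_bd (fun s => Ff x1 s) (fun s => ev (env x1 s) Fyt) y3 y (1/10) 3 (proj1 Hy)
    (fun c Hc => Fy_b x1 c (conj (conj (Rlt_le _ _ x21) (Rle_refl _)) (conj (proj1 Hc) (Rle_trans _ _ _ (proj2 Hc) (proj2 Hy)))))).
  simpl in H1. lra.
Qed.
Lemma E_left y : y3 <= y <= y1 -> Ff x2 y < 0.
Proof.
  intro Hy. pose proof F21r. pose proof x21.
  pose proof (mvt_bd (fun s => Ff x2 s) (fun s => ev (env x2 s) Fyt) y y1 (1/10) 3 (proj2 Hy)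
    (fun c Hc => Fy_b x2 c (conj (conj (Rle_refl _) (Rlt_le _ _ x21)) (conj (Rle_trans _ _ _ (proj1 Hy) (proj1 Hc)) (proj2 Hc))))).
  simpl in H1. lra.
Qed.
Lemma E_top x : x2 <= x <= x1 -> 0 < Gf x y1.
Proof.
  intro Hx. pose proof G21r. pose proof y31.
  pose proof (mvt_bd (fun s => Gf s y1) (fun s => ev (env s y1) Gxt) x2 x (1/10) 3 (proj1 Hx)
    (fun c Hc => Gx_b c y1 (conj (conj (proj1 Hc) (Rle_trans _ _ _ (proj2 Hc) (proj2 Hx))) (conj (Rlt_le _ _ y31) (Rle_refl _))))).
  simpl in H1. lra.
Qed.
Lemma E_bot x : x2 <= x <= x1 -> Gf x y3 < 0.
Proof.
  intro Hx. pose proof G13r. pose proof y31.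
  pose proof (mvt_bd (fun s => Gf s y3) (fun s => ev (env s y3) Gxt) x x1 (1/10) 3 (proj2 Hx)
    (fun c Hc => Gx_b c y3 (conj (conj (Rle_trans _ _ _ (proj1 Hx) (proj1 Hc)) (proj2 Hc)) (conj (Rle_refl _) (Rlt_le _ _ y31))))).
  simpl in H1. lra.
Qed.

Definition clamp y := Rmax y3 (Rmin y y1).
Lemma clamp_in y : y3 <= clamp y <= y1.
Proof. pose proof y31. unfold clamp, Rmax, Rmin; repeat destruct Rle_dec; lra. Qed.
Lemma clamp_id y : y3 <= y <= y1 -> clamp y = y.
Proof. intros. unfold clamp, Rmax, Rmin; repeat destruct Rle_dec; lra. Qed.
Lemma clamp_lip a b : Rabs (clamp a - clamp b) <= Rabs (a - b).
Proof. pose proof y31. unfold clamp, Rmax, Rmin; repeat destruct Rle_dec;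
  unfold Rabs; repeat destruct Rcase_abs; lra. Qed.

Lemma Xex y : {x | x2 <= x <= x1 /\ Ff x (clamp y) = 0}.
Proof.
  pose proof (clamp_in y) as Hc. pose proof x21.
  apply (IVT_interv (fun s => Ff s (clamp y)) x2 x1).
  - intros a Ha. apply derivable_continuous_pt.
    exists (ev (env a (clamp y)) Fxt). apply (proj1 (Fx_b a (clamp y) (conj Ha Hc))).
  - exact x21.
  - apply E_left; auto.
  - apply E_right; auto.
Qed.

Definition Xf y := proj1_sig (Xex y).
Lemma Xf_in y : x2 <= Xf y <= x1. Proof. unfold Xf; destruct (Xex y); simpl; tauto. Qed.
Lemma Xf_zero y : Ff (Xf y) (clamp y) = 0. Proof. unfold Xf; destruct (Xex y); simpl; tauto. Qed.

Lemma Xf_lip a b : 7/10 * Rabs (Xf b - Xf a) <= 3 * Rabs (clamp b - clamp a).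
Proof.
  set (p := Xf a). set (q := Xf b). set (ya := clamp a). set (yb := clamp b).
  pose proof (Xf_in a) as Hp. pose proof (Xf_in b) as Hq. fold p in Hp. fold q in Hq.
  pose proof (clamp_in a) as Ha. pose proof (clamp_in b) as Hb. fold ya in Ha. fold yb in Hb.
  pose proof (Xf_zero a) as Za. pose proof (Xf_zero b) as Zb. fold p ya in Za. fold q yb in Zb.
  pose proof (mvt_lb (fun s => Ff s ya) (fun s => ev (env s ya) Fxt) x2 x1 (7/10) p q
    ltac:(lra) Hp Hq (fun c Hc => Fx_b c ya (conj Hc Ha))) as H1.
  pose proof (mvt_abs (fun s => Ff q s) (fun s => ev (env q s) Fyt) y3 y1 3 ya yb Ha Hb
    (fun c Hc => let (A, B) := Fy_b q c (conj Hq Hc) in conj A (conj (Rle_trans (-3) (1/10) _ ltac:(lra) (proj1 B)) (proj2 B)))) as H2.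
  simpl in H1, H2. rewrite Za in H1. rewrite Zb in H2.
  rewrite Rabs_minus_sym in H2. lra.
Qed.

Definition Hfun y := Gf (Xf y) (clamp y).

Lemma Hf_lip a b : Rabs (Hfun b - Hfun a) <= (3 * (30/7) + 3) * Rabs (b - a).
Proof.
  unfold Hfun.
  pose proof (Xf_in a) as Hp. pose proof (Xf_in b) as Hq.
  pose proof (clamp_in a) as Ha. pose proof (clamp_in b) as Hb.
  pose proof (mvt_abs (fun s => Gf s (clamp b)) (fun s => ev (env s (clamp b)) Gxt) x2 x1 3 (Xf a) (Xf b) Hp Hq
    (fun c Hc => let (A, B) := Gx_b c (clamp b) (conj Hc Hb) in conj A (conj (Rle_trans (-3) (1/10) _ ltac:(lra) (proj1 B)) (proj2 B)))) as H1.
  pose proof (mvt_abs (fun s => Gf (Xf a) s) (fun s => ev (env (Xf a) s) Gyt) y3 y1 3 (clamp a) (clamp b) Ha Hb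
    (fun c Hc => Gy_b (Xf a) c (conj Hp Hc))) as H2.
  simpl in H1, H2.
  pose proof (Xf_lip a b) as H3. pose proof (clamp_lip b a) as H4.
  pose proof (Rabs_triang (Gf (Xf b) (clamp b) - Gf (Xf a) (clamp b)) (Gf (Xf a) (clamp b) - Gf (Xf a) (clamp a))) as T.
  replace (Gf (Xf b) (clamp b) - Gf (Xf a) (clamp b) + (Gf (Xf a) (clamp b) - Gf (Xf a) (clamp a)))
    with (Gf (Xf b) (clamp b) - Gf (Xf a) (clamp a)) in T by ring.
  pose proof (Rabs_pos (b - a)).
  nra.
Qed.

Lemma Hf_cont y : continuity_pt Hfun y.
Proof.
  unfold continuity_pt, continue_in, limit1_in, limit_in. intros eps Heps.
  exists (eps / (3 * (30/7) + 4)). split.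
  - apply Rdiv_lt_0_compat; lra.
  - intros z [_ Hz]. simpl in *. unfold Rdist in *.
    pose proof (Hf_lip y z). pose proof (Rabs_pos (z - y)).
    apply Rle_lt_trans with ((3 * (30/7) + 3) * Rabs (z - y)); auto.
    apply Rle_lt_trans with ((3 * (30/7) + 4) * Rabs (z - y)); [nra|].
    apply Rmult_lt_reg_r with (/ (3 * (30/7) + 4)). apply Rinv_0_lt_compat; lra.
    replace ((3 * (30/7) + 4) * Rabs (z - y) * / (3 * (30/7) + 4)) with (Rabs (z - y)) by (field; lra).
    exact Hz.
Qed.

Open Scope R_scope.

Theorem mainTheorem1 :
  x2 < x1 /\ y3 < y1 /\
  (forall x, x2 <= x <= x1 -> exists d, is_g mu0 c0 x y1 d /\ d > 0) /\
  (forall x, x2 <= x <= x1 -> exists d, is_g mu0 c0 x y3 d /\ d < 0) /\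
  (forall y, y3 <= y <= y1 -> exists d, is_f mu0 c0 x1 y d /\ d > 0) /\
  (forall y, y3 <= y <= y1 -> exists d, is_f mu0 c0 x2 y d /\ d < 0) /\
  (exists xi0 eta0, x2 <= xi0 <= x1 /\ y3 <= eta0 <= y1 /\
     is_f mu0 c0 xi0 eta0 0 /\ is_g mu0 c0 xi0 eta0 0).
Proof.
  pose proof x21. pose proof y31. pose proof y3pos. pose proof x2pos. pose proof mu0pos. pose proof x1mu.
  assert (Hg : forall x y, x2 <= x <= x1 -> is_g mu0 c0 x y (Gf x y)).
  { intros x y Hx. apply is_g_G; lra. }
  assert (Hf : forall x y, y3 <= y -> is_f mu0 c0 x y (Ff x y)).
  { intros x y Hy. apply is_f_F; lra. }
  split; [exact x21|]. split; [exact y31|].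
  split. { intros x Hx. exists (Gf x y1). split; [apply Hg; auto| apply E_top; auto]. }
  split. { intros x Hx. exists (Gf x y3). split; [apply Hg; auto| apply E_bot; auto]. }
  split. { intros y Hy. exists (Ff x1 y). split; [apply Hf; lra| apply E_right; auto]. }
  split. { intros y Hy. exists (Ff x2 y). split; [apply Hf; lra| apply E_left; auto]. }
  destruct (IVT_interv Hfun y3 y1 (fun a _ => Hf_cont a) y31) as [y0 [Hy0 HH]].
  - unfold Hfun. rewrite (clamp_id y3) by lra. apply E_bot, Xf_in.
  - unfold Hfun. rewrite (clamp_id y1) by lra. apply E_top, Xf_in.
  - exists (Xf y0), y0. split; [apply Xf_in|]. split; [auto|].
    pose proof (Xf_zero y0) as Z. rewrite clamp_id in Z by auto.
    unfold Hfun in HH. rewrite clamp_id in HH by auto.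
    split.
    + rewrite <- Z. apply Hf; lra.
    + rewrite <- HH. apply Hg. apply Xf_in.
Qed.
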